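(* Let $0<a<b$, let $\alpha\in(0,1)$, let $k:[a,b]\to\mathbb{R}$ be a continuous nonnegative map, differentiable at every $t>a$, with $k(t)\neq 0$ and $k'(t)\neq 0$ whenever $t>a$. Let $f:[a,b]\to\mathbb{R}$ be continuous on $[a,b]$, $\alpha$-differentiable at every point of $(a,b)$, and suppose $f(a)=f(b)$. Then there exists $c\in(a,b)$ such that $D^{\alpha}(f)(c)=0$.
   Context: For $k$ as in the claim, $f:[a,b]\to\mathbb{R}$, $\alpha\in(0,1]$ and $t\in(a,b)$, the generalized fractional derivative of $f$ of order $\alpha$ at $t$ is $$D^{\alpha}(f)(t)=f^{(\alpha)}(t):=\lim_{\varepsilon\to 0}\frac{f\left(t-k(t)+k(t)\,e^{\varepsilon\frac{(k(t))^{-\alpha}}{k'(t)}}\right)-f(t)}{\varepsilon},$$ and $f$ is called $\alpha$-differentiable at $t$ if this limit exists. *)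

(* Defs.v *)
From Stdlib Require Import Reals.
From Coquelicot Require Import Coquelicot.
Open Scope R_scope.

Definition frac_quot (k : R -> R) (alpha : R) (f : R -> R) (t : R) (eps : R) : R :=
  (f (t - k t + k t * exp (eps * Rpower (k t) (- alpha) / Derive k t)) - f t) / eps.

Definition alpha_differentiable (k : R -> R) (alpha : R) (f : R -> R) (t : R) : Prop :=
  exists l : R, is_lim (frac_quot k alpha f t) 0 l.

(* D^alpha(f)(t) = lim_{eps -> 0} frac_quot (meaningful when alpha_differentiable). *)
Definition gen_frac_deriv (k : R -> R) (alpha : R) (f : R -> R) (t : R) : R :=
  real (Lim (frac_quot k alpha f t) 0).

Definition continuous_on_closed (a b : R) (g : R -> R) : Prop :=
  forall t, a <= t <= b ->
    filterlim g (within (fun x => a <= x <= b) (locally t)) (locally (g t)).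

(* Main.v *)
Require Import Defs.
From Stdlib Require Import Reals Lra.
From Coquelicot Require Import Coquelicot.
Open Scope R_scope.

Lemma exp_cont0 (r : R) : 0 < r -> exists d, 0 < d /\ forall x, Rabs x < d -> Rabs (exp x - 1) < r.
Proof.
  intros Hr.
  assert (H := derivable_continuous_pt exp 0 (derivable_pt_exp 0)).
  destruct (H r Hr) as [d [Hd Hx]].
  exists d; split; auto. intros x Hxd.
  destruct (Req_dec x 0) as [->|Hn].
  - rewrite exp_0. replace (1-1) with 0 by ring. rewrite Rabs_R0; lra.
  - replace 1 with (exp 0) by apply exp_0. apply (Hx x). split. split; [exact I|now apply not_eq_sym].
    simpl. unfold R_dist. now replace (x - 0) with x by ring.
Qed.

Lemma key (k f : R -> R) (alpha a b c l : R) :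
  a < c < b -> (forall y, a <= y <= b -> f y <= f c) ->
  is_lim (frac_quot k alpha f c) 0 l -> l = 0.
Proof.
  intros Hc Hmax Hl.
  set (m := Rpower (k c) (- alpha) / Derive k c).
  set (r := Rmin (c - a) (b - c) / (Rabs (k c) + 1)).
  assert (Hr : 0 < r).
  { unfold r. apply Rdiv_lt_0_compat. apply Rmin_glb_lt; lra.
    pose proof (Rabs_pos (k c)); lra. }
  destruct (exp_cont0 r Hr) as [d [Hd Hexp]].
  set (d1 := d / (Rabs m + 1)).
  assert (Hd1 : 0 < d1).
  { unfold d1. apply Rdiv_lt_0_compat; auto. pose proof (Rabs_pos m); lra. }
  assert (Hin : forall e, Rabs e < d1 ->
     a <= c - k c + k c * exp (e * Rpower (k c) (- alpha) / Derive k c) <= b).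
  { intros e He.
    replace (e * Rpower (k c) (- alpha) / Derive k c) with (e * m) by (unfold m, Rdiv; ring).
    assert (H1 : Rabs (e * m) < d).
    { rewrite Rabs_mult. pose proof (Rabs_pos m). pose proof (Rabs_pos e).
      assert (e1 : Rabs e * (Rabs m + 1) < d).
      { unfold d1 in He. apply Rmult_lt_compat_r with (r := Rabs m + 1) in He; [|lra].
        unfold Rdiv in He. rewrite Rmult_assoc, Rinv_l in He; lra. }
      nra. }
    specialize (Hexp _ H1).
    assert (H2 : Rabs (k c * (exp (e * m) - 1)) < Rmin (c - a) (b - c)).
    { rewrite Rabs_mult. pose proof (Rabs_pos (k c)). pose proof (Rabs_pos (exp (e*m) - 1)).
      assert (r * (Rabs (k c) + 1) = Rmin (c - a) (b - c)).
      { unfold r. field. lra. }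
      nra. }
    pose proof (Rmin_l (c - a) (b - c)). pose proof (Rmin_r (c - a) (b - c)).
    apply Rabs_def2 in H2. lra. }
  apply is_lim_spec in Hl. simpl in Hl.
  assert (Hq : forall e, Rabs e < d1 -> (frac_quot k alpha f c e) * e <= 0).
  { intros e He. unfold frac_quot.
    destruct (Req_dec e 0) as [->|Hn]. lra.
    specialize (Hmax _ (Hin e He)).
    replace ((f (c - k c + k c * exp (e * Rpower (k c) (- alpha) / Derive k c)) - f c) / e * e)
      with (f (c - k c + k c * exp (e * Rpower (k c) (- alpha) / Derive k c)) - f c) by (field; auto).
    lra. }
  destruct (Rtotal_order l 0) as [Hlt|[Heq|Hgt]]; auto; exfalso.
  - assert (Hp : 0 < - l / 2) by lra.
    destruct (Hl (mkposreal _ Hp)) as [[d2 Hd2] Hloc].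
    set (e := - Rmin d1 d2 / 2).
    assert (Hm : 0 < Rmin d1 d2) by (apply Rmin_glb_lt; auto).
    pose proof (Rmin_l d1 d2). pose proof (Rmin_r d1 d2).
    assert (Hae : Rabs e < Rmin d1 d2).
    { unfold e. rewrite Rabs_left; lra. }
    assert (Hb : ball 0 d2 e). { change (Rabs (e - 0) < d2). rewrite Rminus_0_r. lra. }
    specialize (Hloc e Hb). simpl in Hloc.
    assert (e <> 0) by (unfold e; lra). specialize (Hloc H1).
    specialize (Hq e ltac:(lra)). apply Rabs_def2 in Hloc.
    assert (e < 0) by (unfold e; lra). nra.
  - assert (Hp : 0 < l / 2) by lra.
    destruct (Hl (mkposreal _ Hp)) as [[d2 Hd2] Hloc].
    set (e := Rmin d1 d2 / 2).
    assert (Hm : 0 < Rmin d1 d2) by (apply Rmin_glb_lt; auto).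
    pose proof (Rmin_l d1 d2). pose proof (Rmin_r d1 d2).
    assert (Hae : Rabs e < Rmin d1 d2).
    { unfold e. rewrite Rabs_right; lra. }
    assert (Hb : ball 0 d2 e). { change (Rabs (e - 0) < d2). rewrite Rminus_0_r. lra. }
    specialize (Hloc e Hb). simpl in Hloc.
    assert (e <> 0) by (unfold e; lra). specialize (Hloc H1).
    specialize (Hq e ltac:(lra)). apply Rabs_def2 in Hloc.
    assert (e > 0) by (unfold e; lra). nra.
Qed.

Lemma key_min (k f : R -> R) (alpha a b c l : R) :
  a < c < b -> (forall y, a <= y <= b -> f c <= f y) ->
  is_lim (frac_quot k alpha f c) 0 l -> l = 0.
Proof.
  intros Hc Hmin Hl.
  assert (H : - l = 0).
  { apply (key k (fun x => - f x) alpha a b c (- l) Hc).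
    - intros y Hy. specialize (Hmin y Hy). lra.
    - apply is_lim_ext with (f := fun e => - frac_quot k alpha f c e).
      + intros e. unfold frac_quot, Rdiv. ring.
      + apply (is_lim_opp _ _ (Finite l)) in Hl. exact Hl. }
  lra.
Qed.

Definition clamp (a b x : R) := Rmax a (Rmin b x).

Lemma clamp_in a b x : a <= b -> a <= clamp a b x <= b.
Proof.
  intros. unfold clamp. unfold Rmax, Rmin.
  repeat destruct Rle_dec; lra.
Qed.

Lemma clamp_id a b x : a <= x <= b -> clamp a b x = x.
Proof.
  intros. unfold clamp, Rmax, Rmin. repeat destruct Rle_dec; lra.
Qed.

Lemma clamp_lip a b x y : a <= b -> Rabs (clamp a b y - clamp a b x) <= Rabs (y - x).
Proof.
  intros. unfold clamp, Rmax, Rmin.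
  repeat destruct Rle_dec; unfold Rabs; repeat destruct Rcase_abs; lra.
Qed.

Lemma cont_clamp a b f : a <= b -> continuous_on_closed a b f ->
  forall x, continuity_pt (fun y => f (clamp a b y)) x.
Proof.
  intros Hab Hf x eps Heps.
  pose proof (clamp_in a b x Hab) as Hcx.
  specialize (Hf _ Hcx).
  assert (Hb : locally (f (clamp a b x)) (ball (f (clamp a b x)) eps)).
  { exists (mkposreal _ Heps). auto. }
  specialize (Hf _ Hb). destruct Hf as [[d Hd] Hloc].
  exists d. split; [lra|].
  intros y [_ Hy]. simpl in Hy. unfold R_dist in Hy. simpl. unfold R_dist.
  apply (Hloc (clamp a b y)).
  - change (Rabs (clamp a b y - clamp a b x) < d).
    pose proof (clamp_lip a b x y Hab). simpl in *; lra.
  - now apply clamp_in.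
Qed.

Theorem mainTheorem4 (a b alpha : R) (k f : R -> R)
  (hab : 0 < a < b) (halpha : 0 < alpha < 1)
  (hk_cont : continuous_on_closed a b k)
  (hk_nonneg : forall t, a <= t <= b -> 0 <= k t)
  (hk_diff : forall t, a < t < b -> ex_derive k t)
  (hk_ne0 : forall t, a < t <= b -> k t <> 0)
  (hk'_ne0 : forall t, a < t < b -> Derive k t <> 0)
  (hf_cont : continuous_on_closed a b f)
  (hf_adiff : forall t, a < t < b -> alpha_differentiable k alpha f t)
  (hfab : f a = f b) :
  exists c, a < c < b /\ gen_frac_deriv k alpha f c = 0.
Proof.
  assert (Hab : a <= b) by lra.
  pose proof (cont_clamp a b f Hab hf_cont) as Hc.
  destruct (continuity_ab_maj _ a b Hab (fun x _ => Hc x)) as [M [HM HMi]].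
  destruct (continuity_ab_min _ a b Hab (fun x _ => Hc x)) as [m [Hm Hmi]].
  assert (Hmax : forall y, a <= y <= b -> f y <= f M).
  { intros y Hy. specialize (HM y Hy). rewrite !clamp_id in HM; auto. }
  assert (Hmin : forall y, a <= y <= b -> f m <= f y).
  { intros y Hy. specialize (Hm y Hy). rewrite !clamp_id in Hm; auto. }
  assert (Hfin : forall c, a < c < b ->
     (forall l : R, is_lim (frac_quot k alpha f c) 0 l -> l = 0) ->
     exists c, a < c < b /\ gen_frac_deriv k alpha f c = 0).
  { intros c Hcc Hl. exists c. split; auto.
    destruct (hf_adiff c Hcc) as [l Hlim].
    unfold gen_frac_deriv. rewrite (is_lim_unique _ _ _ Hlim). simpl. now apply Hl. }
  destruct (Rlt_dec a M) as [HaM|HaM]; [destruct (Rlt_dec M b) as [HMb|HMb]|].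
  - apply (Hfin M); [lra|]. intros l; apply key with a b; [lra|auto].
  - destruct (Rlt_dec a m) as [Ham|Ham]; [destruct (Rlt_dec m b) as [Hmb|Hmb]|].
    + apply (Hfin m); [lra|]. intros l; apply key_min with a b; [lra|auto].
    + assert (m = b) by lra. assert (M = b) by lra. subst.
      apply (Hfin ((a+b)/2)); [lra|]. intros l; apply key with a b; [lra|].
      intros y Hy. pose proof (Hmax y Hy). pose proof (Hmin y Hy). pose proof (Hmin ((a+b)/2) ltac:(lra)). lra.
    + assert (m = a) by lra. assert (M = b) by lra. subst.
      apply (Hfin ((a+b)/2)); [lra|]. intros l; apply key with a b; [lra|].
      intros y Hy. pose proof (Hmax y Hy). pose proof (Hmin y Hy). pose proof (Hmin ((a+b)/2) ltac:(lra)). lra.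
  - assert (M = a) by lra. subst M.
    destruct (Rlt_dec a m) as [Ham|Ham]; [destruct (Rlt_dec m b) as [Hmb|Hmb]|].
    + apply (Hfin m); [lra|]. intros l; apply key_min with a b; [lra|auto].
    + assert (m = b) by lra. subst.
      apply (Hfin ((a+b)/2)); [lra|]. intros l; apply key with a b; [lra|].
      intros y Hy. pose proof (Hmax y Hy). pose proof (Hmin y Hy). pose proof (Hmin ((a+b)/2) ltac:(lra)). lra.
    + assert (m = a) by lra. subst.
      apply (Hfin ((a+b)/2)); [lra|]. intros l; apply key with a b; [lra|].
      intros y Hy. pose proof (Hmax y Hy). pose proof (Hmin y Hy). pose proof (Hmin ((a+b)/2) ltac:(lra)). lra.
Qed.
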